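(* Let $G$ be an abelian group, $n$ an integer, $X$ a metric compactum, $A\subset X$ a carrier of a nonzero element $\alpha\in\check{H}^n(X;G)$, and $B\subset X$ closed. Let $j_A:A\hookrightarrow A\cup B$ and $j_B:B\hookrightarrow A\cup B$ be the inclusions, and $j_A^*,j_B^*$ the induced homomorphisms on $\check{H}^n(\,\cdot\,;G)$. Then $A\subset B$ if and only if $\ker(j_B^* )\subset\ker(j_A^* )$.
   Context: $\check{H}^k(\,\cdot\,;G)$ is reduced Čech cohomology. For closed $A\subset X$, $i_A:A\hookrightarrow X$ is the inclusion. A closed nonempty set $A\subset X$ is a (cohomological) carrier of a nonzero $\alpha\in\check{H}^n(X;G)$ if $i_A^*(\alpha)\neq0$ and $i_B^*(\alpha)=0$ for every proper closed subset $B\subsetneq A$. *)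

(* Defs.v *)
From HB Require Import structures.
From mathcomp Require Import all_boot all_algebra.
From Stdlib Require Import Reals ZArith.
Set Implicit Arguments. Unset Strict Implicit. Unset Printing Implicit Defensive.
Import GRing.Theory.

Definition is_metric {X : Type} (d : X -> X -> R) : Prop :=
  (forall x y, Rle 0 (d x y)) /\
  (forall x y, d x y = 0%R <-> x = y) /\
  (forall x y, d x y = d y x) /\
  (forall x y z, Rle (d x z) (Rplus (d x y) (d y z))).

Definition is_open {X : Type} (d : X -> X -> R) (U : X -> Prop) : Prop :=
  forall x, U x -> exists eps, Rlt 0 eps /\ forall y, Rlt (d x y) eps -> U y.

Definition is_closed {X : Type} (d : X -> X -> R) (A : X -> Prop) : Prop :=
  is_open d (fun x => ~ A x).

Definition is_compact {X : Type} (d : X -> X -> R) : Prop :=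
  forall (I : Type) (U : I -> X -> Prop), (forall i, is_open d (U i)) ->
    (forall x, exists i, U i x) ->
    exists l : list I, forall x, exists i, List.In i l /\ U i x.

Record fcover {X : Type} (d : X -> X -> R) := FCover {
  fc_n : nat;
  fc_set : 'I_fc_n -> X -> Prop;
  fc_open : forall i, is_open d (fc_set i);
  fc_cov : forall x, exists i, fc_set i x }.
Arguments fc_n {X d} f.
Arguments fc_set {X d} f _ _.

(* an (m-1)-simplex of the nerve of U restricted to Y (ordered Cech simplices) *)
Definition is_simplex {X : Type} (Y : X -> Prop) (k m : nat)
    (U : 'I_k -> X -> Prop) (s : {ffun 'I_m -> 'I_k}) : Prop :=
  exists x, Y x /\ forall j, U (s j) x.

(* cochains of degree m-1 (m = degree + 1); m = 0 is the augmentation degree -1 *)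
Definition cochain (G : zmodType) (k m : nat) := {ffun 'I_m -> 'I_k} -> G.

Definition face (k m : nat) (i : 'I_m.+1) (s : {ffun 'I_m.+1 -> 'I_k})
  : {ffun 'I_m -> 'I_k} := [ffun j => s (lift i j)].

Definition cobd (G : zmodType) (k m : nat) (c : cochain G k m)
  : cochain G k m.+1 :=
  fun s => \big[@GRing.add G/GRing.zero]_(i < m.+1)
     (if odd i then GRing.opp (c (face i s)) else c (face i s)).

Definition is_cocycle (G : zmodType) {X : Type} (Y : X -> Prop) (k m : nat)
    (U : 'I_k -> X -> Prop) (c : cochain G k m) : Prop :=
  forall s, is_simplex Y U s -> cobd c s = GRing.zero.

Definition is_coboundary (G : zmodType) {X : Type} (Y : X -> Prop) (k : nat)
    (U : 'I_k -> X -> Prop) (m : nat) : cochain G k m -> Prop :=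
  match m return cochain G k m -> Prop with
  | 0 => fun c => forall s, is_simplex Y U s -> c s = GRing.zero
  | m'.+1 => fun c => exists b : cochain G k m',
                 forall s, is_simplex Y U s -> c s = cobd b s
  end.

Definition refines {X : Type} {d : X -> X -> R} (V U : fcover d)
    (p : 'I_(fc_n V) -> 'I_(fc_n U)) : Prop :=
  forall j x, fc_set V j x -> fc_set U (p j) x.

Arguments refines {X d} V U p.

Definition pull (G : zmodType) (kV kU m : nat) (p : 'I_kV -> 'I_kU)
    (c : cochain G kU m) : cochain G kV m :=
  fun s => c [ffun j => p (s j)].

(** A class is represented by a finite open cover U of X and a cocycle c of
   degree n on the nerve of U restricted to Y (m = n+1).  Restriction along an
   inclusion Y' ⊆ Y uses the same representative on the smaller nerve. *)
Definition dg (n : Z) : nat := Z.to_nat (n + 1).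

Definition cech_cocycle (G : zmodType) {X : Type} {d : X -> X -> R}
    (Y : X -> Prop) (n : Z) (U : fcover d) (c : cochain G (fc_n U) (dg n))
  : Prop := is_cocycle Y (fc_set U) c.

(* the class of (U, c) in Ȟ^n(Y;G) is zero (Ȟ^n = 0 for n < 0) *)
Definition cech_zero (G : zmodType) {X : Type} {d : X -> X -> R}
    (Y : X -> Prop) (n : Z) (U : fcover d) (c : cochain G (fc_n U) (dg n))
  : Prop :=
  (n < 0)%Z \/
  exists (V : fcover d) (p : 'I_(fc_n V) -> 'I_(fc_n U)),
    refines V U p /\ is_coboundary Y (fc_set V) (pull p c).

Arguments cech_cocycle {G X d} Y n U c.
Arguments cech_zero {G X d} Y n U c.

Definition is_carrier (G : zmodType) {X : Type} (d : X -> X -> R) (n : Z)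
    (U : fcover d) (alpha : cochain G (fc_n U) (dg n)) (A : X -> Prop) : Prop :=
  ~ cech_zero (fun _ => True) n U alpha /\
  is_closed d A /\ (exists x, A x) /\
  ~ cech_zero A n U alpha /\
  forall B : X -> Prop, is_closed d B -> (forall x, B x -> A x) ->
    (exists x, A x /\ ~ B x) -> cech_zero B n U alpha.
Arguments is_carrier {G X} d n U alpha A.

(* Main.v *)
Require Import Defs.
From HB Require Import structures.
From mathcomp Require Import all_boot all_algebra.
From Stdlib Require Import Reals ZArith.
From Stdlib Require Import Lra Lia List Classical ClassicalEpsilon.
From mathcomp Require Import zify.
Set Implicit Arguments. Unset Strict Implicit. Unset Printing Implicit Defensive.
Import GRing.Theory.

Section Alg.
Local Open Scope ring_scope.


Definition sg (G : zmodType) (b : bool) (x : G) : G := if b then - x else x.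

Lemma sgN (G : zmodType) b (x : G) : sg (~~ b) x = - sg b x.
Proof. by case: b; rewrite /sg /= ?opprK. Qed.

Lemma sgsg (G : zmodType) b b' (x : G) : sg b (sg b' x) = sg (b (+) b') x.
Proof. by case: b; case: b'; rewrite /sg /= ?opprK. Qed.

Lemma sgD (G : zmodType) b (x y : G) : sg b (x + y) = sg b x + sg b y.
Proof. by case: b; rewrite /sg // opprD. Qed.

Lemma sg_sum (G : zmodType) b (I : finType) (F : I -> G) :
  sg b (\sum_i F i) = \sum_i sg b (F i).
Proof. case: b; rewrite /sg //. by rewrite -sumrN. Qed.

Definition Psi m (x : 'I_m.+2 * 'I_m.+1) : 'I_m.+2 * 'I_m.+1 :=
  if (x.2 < x.1)%nat then (inord x.2, inord x.1.-1) else (inord x.2.+1, inord x.1).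

Lemma PsiK m : involutive (@Psi m).
Proof.
case=> i j; rewrite /Psi /=.
have hi := ltn_ord i; have hj := ltn_ord j.
case: (ltnP j i) => h /=.
- rewrite (@inordK _ j) ?(@inordK _ i.-1); try lia.
  have -> : (i.-1 < j)%nat = false by lia.
  congr pair; apply: val_inj; rewrite /= ?inordK; lia.
- rewrite (@inordK _ j.+1) ?(@inordK _ i); try lia.
  have -> : (i < j.+1)%nat = true by lia.
  congr pair; apply: val_inj; rewrite /= ?inordK; lia.
Qed.

Lemma lift_lift m (i : 'I_m.+2) (j : 'I_m.+1) (i' : 'I_m.+1) (j' : 'I_m.+2)
  (k : 'I_m) : (j < i)%nat -> nat_of_ord j' = j -> nat_of_ord i' = i.-1 ->
  lift i (lift j k) = lift j' (lift i' k) :> 'I_m.+2.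
Proof.
move=> h e1 e2; apply: val_inj => /=.
rewrite e1 e2.
rewrite /bump; case: (leqP j k) => h1; case: (leqP i.-1 k) => h2 /=.
all: try (case: (leqP i _) => h3); try (case: (leqP j _) => h4); lia.
Qed.

Lemma cobd_cobd (G : zmodType) k m (c : cochain G k m) s :
  cobd (cobd c) s = 0.
Proof.
rewrite /cobd.
have e1 : forall i : 'I_m.+2, (if odd i then - (\big[+%R/0]_(j < m.+1)
      (if odd j then - c (face j (face i s)) else c (face j (face i s))))
   else \big[+%R/0]_(j < m.+1)
      (if odd j then - c (face j (face i s)) else c (face j (face i s))))
   = \sum_(j < m.+1) sg (odd i (+) odd j) (c (face j (face i s))).
  move=> i; rewrite -[LHS]/(sg (odd i) _) sg_sum; apply: eq_bigr => j _.
  by rewrite -sgsg.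
rewrite (eq_bigr _ (fun i _ => e1 i)) pair_big /=.
set F := fun p : 'I_m.+2 * 'I_m.+1 => sg (odd p.1 (+) odd p.2) (c (face p.2 (face p.1 s))).
rewrite (bigID (fun p : 'I_m.+2 * 'I_m.+1 => (p.2 < p.1)%nat)) /=.
rewrite (reindex_inj (inv_inj (@PsiK m))) /=.
rewrite (eq_bigl (fun j : 'I_m.+2 * 'I_m.+1 => ~~ (j.2 < j.1)%nat)); last first.
  case=> i j /=; rewrite /Psi /=.
  have hi := ltn_ord i; have hj := ltn_ord j.
  case: (ltnP j i) => h /=.
  - rewrite !inordK; lia.
  - rewrite !inordK; lia.
rewrite -big_split /=; apply: big1 => [[i j]] /= h.
rewrite /Psi /=.
have hi := ltn_ord i; have hj := ltn_ord j.
rewrite (negbTE h) /=.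
have -> : face (inord i) (face (inord j.+1) s) = face j (face i s).
  apply/ffunP => k0; rewrite /face !ffunE; congr (s _).
  apply: lift_lift; rewrite ?inordK; lia.
rewrite (@inordK _ j.+1) ?(@inordK _ i); try lia.
by rewrite -[odd j.+1]/(~~ odd j) addNb addbC sgN addNr.
Qed.

Lemma face_map k k' m (f : 'I_k -> 'I_k') (i : 'I_m.+1) (s : {ffun 'I_m.+1 -> 'I_k}) :
  face i [ffun j => f (s j)] = [ffun j => f (face i s j)].
Proof. by apply/ffunP => j; rewrite /face !ffunE. Qed.

Lemma cobd_pull (G : zmodType) k k' m (f : 'I_k -> 'I_k') (c : cochain G k' m) s :
  cobd (pull f c) s = cobd c [ffun j => f (s j)].
Proof. by rewrite /cobd; apply: eq_bigr => i _; rewrite /pull -face_map. Qed.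

Lemma cobdB (G : zmodType) k m (c1 c2 : cochain G k m) s :
  cobd (fun u => c1 u - c2 u) s = cobd c1 s - cobd c2 s.
Proof.
rewrite /cobd -sumrB; apply: eq_bigr => i _.
by case: (odd i); rewrite ?opprB ?opprD ?opprK // addrC.
Qed.

Lemma cobdD (G : zmodType) k m (c1 c2 : cochain G k m) s :
  cobd (fun u => c1 u + c2 u) s = cobd c1 s + cobd c2 s.
Proof.
rewrite /cobd -big_split; apply: eq_bigr => i _.
by case: (odd i); rewrite ?opprD.
Qed.

Lemma cobd0 (G : zmodType) k m s : cobd (fun _ : {ffun 'I_m -> 'I_k} => (0 : G)) s = 0.
Proof. by rewrite /cobd; apply: big1 => i _; case: (odd i); rewrite ?oppr0. Qed.

End Alg.

Section Topo.
Variables (X : Type) (d : X -> X -> R) (hd : is_metric d).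

Lemma ball_open c r : is_open d (fun y => Rlt (d c y) r).
Proof.
move=> x hx; exists (Rminus r (d c x)); split; first lra.
move=> y hy; case: hd => _ [_ [_ tri]]; have := tri c x y; lra.
Qed.

Lemma open_inter (U V : X -> Prop) : is_open d U -> is_open d V ->
  is_open d (fun x => U x /\ V x).
Proof.
move=> hU hV x [ux vx]; case: (hU x ux) => e1 [e1p h1]; case: (hV x vx) => e2 [e2p h2].
exists (Rmin e1 e2); split; first by apply: Rmin_glb_lt.
move=> y hy; split; [apply: h1 | apply: h2];
  [apply: Rlt_le_trans hy (Rmin_l _ _) | apply: Rlt_le_trans hy (Rmin_r _ _)].
Qed.

Lemma finite_eps (T : finType) (x : X) (Q : T -> X -> Prop) :
  (forall t, exists e, Rlt 0 e /\ forall y, Rlt (d x y) e -> Q t y) ->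
  exists e, Rlt 0 e /\ forall t y, Rlt (d x y) e -> Q t y.
Proof.
move=> h.
suff [e [ep he]] : exists e, Rlt 0 e /\ forall t, t \in enum T -> forall y, Rlt (d x y) e -> Q t y.
  by exists e; split => // t y; apply: he; rewrite mem_enum.
elim: (enum T) => [|t l [e [ep he]]].
  by exists 1%R; split => //; lra.
case: (h t) => e1 [e1p h1].
exists (Rmin e e1); split; first by apply: Rmin_glb_lt.
move=> t'; rewrite inE => /orP [/eqP -> | ht] y hy.
  by apply: h1; apply: Rlt_le_trans hy (Rmin_r _ _).
by apply: he => //; apply: Rlt_le_trans hy (Rmin_l _ _).
Qed.

Lemma shrink (hc : is_compact d) (V : fcover d) (a : X) :
  exists k (c : 'I_k -> X) (r : 'I_k -> R) (q : 'I_k -> 'I_(fc_n V)),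
    (forall j, Rlt 0 (r j)) /\
    (forall j y, Rle (d (c j) y) (r j) -> fc_set V (q j) y) /\
    (forall x, exists j, Rlt (d (c j) x) (r j)).
Proof.
have H : forall x, { p : 'I_(fc_n V) * R | Rlt 0 p.2 /\
    forall y, Rlt (d x y) p.2 -> fc_set V p.1 y }.
  move=> x; apply: constructive_indefinite_description.
  case: (fc_cov V x) => i hi; case: (fc_open hi) => e [ep he].
  by exists (i, e).
pose idx x := (proj1_sig (H x)).1.
pose rad x := Rdiv (proj1_sig (H x)).2 2.
have radp : forall x, Rlt 0 (rad x).
  by move=> x; rewrite /rad; case: (proj2_sig (H x)) => h _; lra.
have radK : forall x y, Rle (d x y) (rad x) -> fc_set V (idx x) y.
  move=> x y; rewrite /rad /idx; case: (proj2_sig (H x)) => h1 h2 hy.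
  apply: h2; lra.
case: (hc X (fun x y => Rlt (d x y) (rad x)) (fun x => @ball_open x (rad x))).
  move=> x; exists x; case: hd => _ [h0 _].
  by have -> : d x x = 0%R by apply/h0.
move=> l hl.
exists (length l), (fun j => nth j l a), (fun j => rad (nth j l a)),
  (fun j => idx (nth j l a)).
split; first by move=> j; apply: radp.
split; first by move=> j y; apply: radK.
move=> x; case: (hl x) => y [iny hy].
case: (In_nth l y a iny) => n [hn en].
have hn' : (n < length l)%nat by apply/ltP.
by exists (Ordinal hn') => /=; rewrite en.
Qed.

End Topo.

Section Core.
Local Open Scope ring_scope.

Lemma core (G : zmodType) (X : Type) (d : X -> X -> R) (hd : is_metric d)
  (hc : is_compact d) m (U : fcover d) (alpha : cochain G (fc_n U) m.+1)
  (halpha : is_cocycle (fun _ => True) (fc_set U) alpha)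
  (A B : X -> Prop) (a : X) (hA : is_closed d A) (hB : is_closed d B)
  (V0 : fcover d) (p : 'I_(fc_n V0) -> 'I_(fc_n U)) (hp : refines V0 U p)
  (b : cochain G (fc_n V0) m)
  (hb : forall s, is_simplex (fun x => A x /\ B x) (fc_set V0) s -> pull p alpha s = cobd b s) :
  exists (W : fcover d) (beta : cochain G (fc_n W) m.+1),
   is_cocycle (fun x => A x \/ B x) (fc_set W) beta /\
   (forall s, is_simplex B (fc_set W) s -> beta s = 0) /\
   (forall (W2 : fcover d) p2, refines W2 W p2 ->
     forall e : cochain G (fc_n W2) m,
     (forall s, is_simplex A (fc_set W2) s -> pull p2 beta s = cobd e s) ->
     exists P, refines W2 U P /\ exists b2 : cochain G (fc_n W2) m,
       forall s, is_simplex A (fc_set W2) s -> pull P alpha s = cobd b2 s).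
Proof.
case: (shrink hd hc V0 a) => k [c [r [q [hr [hK hcov]]]]].
pose Vp (j : 'I_k) y := Rlt (d (c j) y) (r j).
pose K (j : 'I_k) y := Rle (d (c j) y) (r j).
pose bad (u : {ffun 'I_m.+1 -> 'I_k}) := ~ exists y, A y /\ B y /\ forall j, K (u j) y.
pose F x := A x /\ exists u, bad u /\ forall j, K (u j) x.
pose pi (i : 'I_(k + k)) : 'I_k := match fintype.split i with inl j => j | inr j => j end.
pose Ws (i : 'I_(k + k)) x := Vp (pi i) x /\ (if (i < k)%nat then ~ B x else ~ F x).
have VpK : forall j y, Vp j y -> K j y by move=> j y; rewrite /Vp /K; lra.
have Fopen : is_open d (fun x => ~ F x).
  move=> x hFx; case: (classic (A x)) => hAx; last first.
    case: (hA x hAx) => e [ep he]; exists e; split => // y hy [hAy _].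
    exact: he hy hAy.
  have [e [ep he]] : exists e, Rlt 0 e /\ forall (u : {ffun 'I_m.+1 -> 'I_k}) y,
      Rlt (d x y) e -> bad u -> ~ forall j, K (u j) y.
    apply: (@finite_eps X d _ x (fun u y => bad u -> ~ forall j, K (u j) y)) => u.
    case: (classic (bad u)) => hu; last first.
      by exists 1%R; split; [lra | move=> y _ /hu []].
    have [j hj] : exists j, ~ K (u j) x.
      apply: NNPP => hn; apply: hFx; split => //; exists u; split => // j.
      by apply: NNPP => hj; apply: hn; exists j.
    exists (Rminus (d (c (u j)) x) (r (u j))); split.
      by rewrite /K in hj; lra.
    move=> y hy _ hall; have := hall j; rewrite /K => hy2.
    case: hd => _ [_ [hsym tri]]; have := tri (c (u j)) y x; rewrite (hsym y x).
    lra.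
  exists e; split => // y hy [hAy [u [hu hKu]]].
  exact: he hy hu hKu.
have Wopen : forall i, is_open d (Ws i).
  move=> i; apply: open_inter; first exact: ball_open.
  by case: (i < k)%nat.
have Wcov : forall x, exists i, Ws i x.
  move=> x; case: (hcov x) => j hj.
  case: (classic (B x)) => hBx.
  - exists (rshift k j); rewrite /Ws /pi.
    have -> : fintype.split (rshift k j) = inr j := unsplitK (inr j : 'I_k + 'I_k).
    split => //=.
    have -> : (k + j < k)%nat = false by lia.
    move=> [hAx [u [hu hKu]]]; apply: hu; exists x; split => //.
  - exists (lshift k j); rewrite /Ws /pi.
    have -> : fintype.split (lshift k j) = inl j := unsplitK (inl j : 'I_k + 'I_k).
    split => //=.
    by have -> : (j < k)%nat = true by apply: ltn_ord.
pose W := @FCover X d (k + k) Ws Wopen Wcov.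
pose a0 := pull p alpha.
pose al := pull q a0.
pose bl := pull q b.
pose g (u : {ffun 'I_m.+1 -> 'I_k}) : G := al u - cobd bl u.
pose beta (s : {ffun 'I_m.+1 -> 'I_(k + k)}) :=
  if (s ord0 < k)%nat then g [ffun j => pi (s j)] else 0.
have good : forall (u : {ffun 'I_m.+1 -> 'I_k}) x, A x -> ~ F x -> (forall j, Vp (u j) x) -> g u = 0.
  move=> u x hAx hFx hu.
  case: (classic (bad u)) => hbad.
    by exfalso; apply: hFx; split => //; exists u; split => // j; apply: VpK.
  case: (NNPP _ hbad) => y [hAy [hBy hKy]].
  rewrite /g /al /bl cobd_pull.
  have -> : pull q a0 u = pull p alpha [ffun j => q (u j)] by [].
  rewrite (hb [ffun j => q (u j)]); first by rewrite subrr.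
  exists y; split => // j; rewrite ffunE; apply: hK; exact: hKy.
have gcoc : forall (t : {ffun 'I_m.+2 -> 'I_k}) x, (forall j, Vp (t j) x) -> cobd g t = 0.
  move=> t x ht.
  rewrite /g cobdB cobd_cobd subr0 /al cobd_pull /a0 cobd_pull.
  apply: halpha; exists x; split => // j; rewrite !ffunE.
  apply: hp; apply: hK; apply: VpK; exact: ht.
exists W, beta; split; [|split].
-
  move=> s [x [hABx hWx]].
  set t := [ffun j => pi (s j)].
  set R0 := \big[+%R/0]_(i < m.+1)
     (if odd (lift ord0 i) then - g (face (lift ord0 i) t) else g (face (lift ord0 i) t)).
  have E2 : cobd g t = g (face ord0 t) + R0 by rewrite /cobd big_ord_recl.
  have E1 : cobd beta s = (if (s (lift ord0 ord0) < k)%nat then g (face ord0 t) else 0)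
       + (if (s ord0 < k)%nat then R0 else 0).
    rewrite /cobd big_ord_recl /=; congr (_ + _).
      by rewrite /beta /face ffunE -face_map.
    rewrite /R0; case: ifP => hs0.
      apply: eq_bigr => i _; rewrite /beta /face ffunE.
      have -> : lift (lift ord0 i) ord0 = ord0 :> 'I_m.+2 by apply: val_inj.
      by rewrite hs0 -face_map.
    apply: big1 => i _; rewrite /beta /face ffunE.
    have -> : lift (lift ord0 i) ord0 = ord0 :> 'I_m.+2 by apply: val_inj.
    by rewrite hs0; case: (odd _); rewrite ?oppr0.
  have ht : forall j, Vp (t j) x by move=> j; rewrite ffunE; case: (hWx j).
  have C0 := gcoc t x ht; rewrite E2 in C0.
  have mixed : (s (lift ord0 ord0) < k)%nat != (s ord0 < k)%nat -> g (face ord0 t) = 0.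
    move=> hne; apply: (good _ x).
    + case: hABx => // hBx; exfalso.
      case: (hWx ord0) => _; case: (hWx (lift ord0 ord0)) => _.
      by move: hne; case: (_ < k)%nat; case: (_ < k)%nat.
    + move=> hFx; case: (hWx ord0) => _; case: (hWx (lift ord0 ord0)) => _.
      by move: hne; case: (_ < k)%nat; case: (_ < k)%nat.
    + by move=> j; rewrite /face ffunE; apply: ht.
  rewrite E1; move: mixed.
  case: (_ < k)%nat; case: (_ < k)%nat => //= h.
  + by rewrite addr0 h.
  + by move: C0; rewrite h // !add0r.
  + by rewrite addr0.
-
  move=> s [x [hBx hWx]]; rewrite /beta.
  case: ifP => // hs; case: (hWx ord0) => _; rewrite /= hs; by [].
-
  move=> W2 p2 hp2 e he.
  exists (fun i => p (q (pi (p2 i)))); split.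
    move=> i x hx; apply: hp; apply: hK; apply: VpK.
    by case: (hp2 _ _ hx).
  exists (fun v : {ffun 'I_m -> 'I_(fc_n W2)} => bl [ffun j => pi (p2 (v j))] + e v).
  move=> s hs; have := he s hs; case: hs => x [hAx hWx].
  rewrite cobdD -[fun v => bl _]/(pull (fun i => pi (p2 i)) bl) cobd_pull.
  set u := [ffun j => pi (p2 (s j))].
  have -> : pull (fun i => p (q (pi (p2 i)))) alpha s = al u.
    by rewrite /al /a0 /pull; congr alpha; apply/ffunP => j; rewrite !ffunE.
  rewrite /pull /beta ffunE.
  have -> : [ffun j => pi ([ffun j0 => p2 (s j0)] j)] = u.
    by apply/ffunP => j; rewrite !ffunE.
  case: ifP => hs0 <-.
    by rewrite /g addrC subrK.
  rewrite addr0; apply/eqP; rewrite -subr_eq0; apply/eqP.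
  apply: (good u x hAx).
    by case: (hp2 _ _ (hWx ord0)); rewrite hs0.
  by move=> j; rewrite ffunE; case: (hp2 _ _ (hWx j)).
Qed.

End Core.

Lemma cob_mono (G : zmodType) (X : Type) (A B : X -> Prop) k (Vs : 'I_k -> X -> Prop) m
  (c : cochain G k m) : (forall x, A x -> B x) ->
  is_coboundary B Vs c -> is_coboundary A Vs c.
Proof.
move=> hAB; case: m c => [|m] c /=.
  move=> h s [x [hx hs]]; apply: h; exists x; split; [exact: hAB | exact: hs].
move=> [b hb]; exists b => s [x [hx hs]]; apply: hb; exists x; split; [exact: hAB | exact: hs].
Qed.

Theorem lemma2p2 (G : zmodType) (n : Z) (X : Type) (d : X -> X -> R)
    (hd : is_metric d) (hc : is_compact d)
    (U : fcover d) (alpha : cochain G (fc_n U) (dg n))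
    (halpha : cech_cocycle (fun _ => True) n U alpha)
    (A B : X -> Prop) (hA : is_carrier d n U alpha A) (hB : is_closed d B) :
  (forall x, A x -> B x) <->
  (forall (V : fcover d) (beta : cochain G (fc_n V) (dg n)),
     cech_cocycle (fun x => A x \/ B x) n V beta ->
     cech_zero B n V beta -> cech_zero A n V beta).
Proof.
split.
  move=> hsub V beta _ [hn | [V2 [p2 [href hcob]]]]; first by left.
  right; exists V2, p2; split => //; exact: cob_mono hsub hcob.
move=> H; apply: NNPP => hn.
case: hA => [hnz [hAc [[a ha] [hnzA hmin]]]].
have hn0 : ~ (n < 0)%Z by move=> h; apply: hnz; left.
have [x0 [hx0 hx0B]] : exists x, A x /\ ~ B x.
  apply: NNPP => h; apply: hn => x hx; apply: NNPP => hb; apply: h; by exists x.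
have hABc : is_closed d (fun x => A x /\ B x).
  move=> x hx; case: (classic (A x)) => hax.
    have hbx : ~ B x by move=> hbx; apply: hx.
    case: (hB x hbx) => e [ep he]; exists e; split => // y hy [_ hby]; exact: he hy hby.
  case: (hAc x hax) => e [ep he]; exists e; split => // y hy [hay _]; exact: he hy hay.
have hAB := hmin _ hABc (fun x h => proj1 h) (ex_intro _ x0 (conj hx0 (fun h => hx0B (proj2 h)))).
have Hdg : dg n = (Z.to_nat n).+1 by rewrite /dg; lia.
clear hnz hmin; move: alpha halpha hnzA hAB H; rewrite /cech_cocycle /cech_zero Hdg.
move=> alpha halpha hnzA [hneg | [V0 [p [hp [b hb]]]]] H; first by [].
have [W [beta [hcoc [hBz hAimp]]]] :=
  core hd hc halpha a hAc hB hp hb.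
case: (H W beta hcoc).
  right; exists W, (fun i => i); split; first by move=> j x.
  exists (fun _ => (GRing.zero : G)) => s hs; rewrite cobd0 /pull.
  have -> : [ffun j => s j] = s by apply/ffunP => j; rewrite ffunE.
  exact: hBz.
  by [].
move=> [W2 [p2 [hp2 [e he]]]].
have [P [hP [b2 hb2]]] := hAimp W2 p2 hp2 e he.
apply: hnzA; right; exists W2, P; split => //; exists b2; exact: hb2.
Qed.
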